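(* Let $\mathcal{X}\subseteq\mathbb{R}^d$ and let $\mathcal{M}$ be a randomized mechanism on weighted data sets that admits a weighted distinguishability profile $\epsilon\colon[1,\infty)\times\mathcal{X}\to\mathbb{R}_{\ge 0}$. Let $q\colon\mathcal{X}\to(0,1]$ be a function and let $S_q$ be the Poisson importance sampler for $q$. Then the mechanism $\widehat{\mathcal{M}}=\mathcal{M}\circ S_q$ (acting on unweighted data sets) admits the distinguishability profile $$\psi(\mathbf{x})=\log\Big(1+q(\mathbf{x})\big(e^{\epsilon(w,\mathbf{x})}-1\big)\Big),\qquad\text{where } w=1/q(\mathbf{x}).$$
   Context: A data set is a finite subset $\mathcal{D}$ of $\mathcal{X}$. Two distributions $P,Q$ on a space $\mathcal{Y}$ are $\epsilon$-indistinguishable ($\epsilon\ge 0$) if $P(Y)\le e^{\epsilon}Q(Y)$ and $Q(Y)\le e^{\epsilon}P(Y)$ for all measurable $Y\subseteq\mathcal{Y}$. A function $\psi\colon\mathcal{X}\to\mathbb{R}_{\ge0}$ is a distinguishability profile of a mechanism $\mathcal{A}$ on data sets if for all data sets $\mathcal{D}\subseteq\mathcal{X}$ and all points $\mathbf{x}\in\mathcal{X}$, the distributions of $\mathcal{A}(\mathcal{D})$ and $\mathcal{A}(\mathcal{D}\cup\{\mathbf{x}\})$ are $\psi(\mathbf{x})$-indistinguishable. A weighted data set is a finite set $\mathcal{S}=\{(w_i,\mathbf{x}_i)\}_{i=1}^n$ with $w_i\ge1$, $\mathbf{x}_i\in\mathcal{X}$. A function $\epsilon\colon[1,\infty)\times\mathcal{X}\to\mathbb{R}_{\ge0}$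 is a weighted distinguishability profile of a mechanism $\mathcal{M}$ on weighted data sets if for all weighted data sets $\mathcal{S}$ and all $(w',\mathbf{x}')$, the distributions of $\mathcal{M}(\mathcal{S})$ and $\mathcal{M}(\mathcal{S}\cup\{(w',\mathbf{x}')\})$ are $\epsilon(w',\mathbf{x}')$-indistinguishable. The Poisson importance sampler for $q$ is the randomized map $S_q(\mathcal{D})=\{(w_i,\mathbf{x}_i)\mid \gamma_i=1\}$ for $\mathcal{D}=\{\mathbf{x}_1,\dots,\mathbf{x}_n\}$, where $w_i=1/q(\mathbf{x}_i)$ and $\gamma_1,\dots,\gamma_n$ are independent Bernoulli variables with parameters $q(\mathbf{x}_i)$. *)

(* Defs.v *)
From HB Require Import structures.
From mathcomp Require Import all_boot all_order all_algebra.
From mathcomp Require Import finmap.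
From mathcomp Require Import all_classical all_reals all_analysis.
Set Implicit Arguments. Unset Strict Implicit. Unset Printing Implicit Defensive.
Import Order.TTheory GRing.Theory Num.Theory.
Local Open Scope classical_set_scope.
Local Open Scope ring_scope.
Local Open Scope fset_scope.

Notation point R n := ('rV[R]_n).

Definition dataset_in (R : realType) (n : nat) (X : set (point R n))
  (D : {fset point R n}) : Prop := forall x, x \in D -> X x.

Definition wdataset_in (R : realType) (n : nat) (X : set (point R n))
  (S : {fset (R * point R n)}) : Prop :=
  forall p, p \in S -> 1 <= p.1 /\ X p.2.

Definition indist (R : realType) (dY : measure_display) (Y : measurableType dY)
  (eps : R) (P Q : set Y -> \bar R) : Prop :=
  forall A : set Y, measurable A ->
    (P A <= (expR eps)%:E * Q A)%E /\ (Q A <= (expR eps)%:E * P A)%E.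

Definition weighted_profile (R : realType) (n : nat) (X : set (point R n))
  (dY : measure_display) (Y : measurableType dY)
  (M : {fset (R * point R n)} -> probability Y R)
  (eps : R -> point R n -> R) : Prop :=
  (forall w x, 1 <= w -> X x -> 0 <= eps w x) /\
  forall S w' x', wdataset_in X S -> 1 <= w' -> X x' ->
    indist (eps w' x') (M S) (M (S `|` [fset (w', x')])).

(* Distinguishability profile of a mechanism on (unweighted) data sets,
   given through the law of its output (a set function on Y). *)
Definition profile (R : realType) (n : nat) (X : set (point R n))
  (dY : measure_display) (Y : measurableType dY)
  (A : {fset point R n} -> set Y -> \bar R)
  (psi : point R n -> R) : Prop :=
  (forall x, X x -> 0 <= psi x) /\
  forall D x, dataset_in X D -> X x ->
    indist (psi x) (A D) (A (D `|` [fset x])).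

(* Output of the Poisson importance sampler S_q on D when exactly the points of
   T (a subset of D) are selected: {(1/q x, x) | x in T}. *)
Definition weighted_of (R : realType) (n : nat) (q : point R n -> R)
  (D : {fset point R n}) (T : {set D}) : {fset (R * point R n)} :=
  [fset ((q (val x))^-1, val x) | x in T].

(* Probability that the Poisson importance sampler selects exactly T:
   independent Bernoulli(q x) indicators for x in D. *)
Definition sel_prob (R : realType) (n : nat) (q : point R n -> R)
  (D : {fset point R n}) (T : {set D}) : R :=
  (\prod_(x in T) q (val x)) * (\prod_(x in ~: T) (1 - q (val x))).

(* Law of the composed mechanism  M o S_q  on data set D:
   P(M(S_q(D)) in A) = sum_T P(S_q(D) = T-weighted) * P(M(T-weighted) in A). *)
Definition composed_law (R : realType) (n : nat)
  (dY : measure_display) (Y : measurableType dY)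
  (M : {fset (R * point R n)} -> probability Y R)
  (q : point R n -> R) (D : {fset point R n}) (A : set Y) : \bar R :=
  (\sum_(T : {set D}) (sel_prob q T)%:E * M (weighted_of q T) A)%E.

(* Main.v *)
Require Import Defs.
From HB Require Import structures.
From mathcomp Require Import all_boot all_order all_algebra.
From mathcomp Require Import finmap.
From mathcomp Require Import all_classical all_reals all_analysis.
From mathcomp Require Import ring lra.
Import Order.TTheory GRing.Theory Num.Theory.
Local Open Scope classical_set_scope.
Local Open Scope ring_scope.

Section Comb.
Local Open Scope fset_scope.
Variables (R : realType) (n : nat) (q : 'rV[R]_n -> R) (D : {fset 'rV[R]_n}) (x : 'rV[R]_n).
Hypothesis xD : x \notin D.

Definition D' := D `|` [fset x].
Lemma xinD' : x \in D'. Proof. by rewrite !inE eqxx orbT. Qed.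
Definition xx : D' := [` xinD'].
Definition sDD' : D `<=` D' := fsubsetUl D [fset x].
Definition io : D -> D' := fincl sDD'.
Definition g (T0 : {set D}) : {set D'} := io @: T0.
Definition h (T0 : {set D}) : {set D'} := xx |: g T0.

Lemma io_inj : injective io. Proof. exact: fincl_inj. Qed.
Lemma io_val z : val (io z) = val z. Proof. by []. Qed.

Lemma L1 (y : D') : y != xx -> exists z, y = io z.
Proof.
move=> yx.
have : val y \in D'. by apply: valP.
rewrite in_fsetU in_fset1 => /orP [yD|/eqP yxe].
  by exists [` yD]; apply: val_inj.
have e : y = xx by apply: val_inj.
by move: yx; rewrite e eqxx.
Qed.

Lemma L2 z : io z != xx.
Proof.
apply/eqP => /(congr1 val) /= e.
by move: xD; rewrite -e (valP z).
Qed.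

Lemma L3 T0 z : (io z \in g T0) = (z \in T0).
Proof. by rewrite mem_imset //; exact: io_inj. Qed.

Lemma L4 T0 : xx \notin g T0.
Proof.
apply/negP => /imsetP [z _ e]; by move: (L2 z); rewrite -e eqxx.
Qed.

Lemma yP (y : D') : y = xx \/ exists z, y = io z.
Proof. by case: (eqVneq y xx) => [->|/L1]; [left|right]. Qed.

Lemma g_inj : injective g.
Proof.
move=> T1 T2 e; apply/setP => z.
by rewrite -!L3 e.
Qed.

Lemma h_inj : injective h.
Proof.
move=> T1 T2 e; apply/setP => z.
have := congr1 (fun T : {set D'} => io z \in T) e => /=.
by rewrite /h !in_setU1 (negbTE (L2 z)) /= !L3.
Qed.

Lemma compl_g T0 : ~: g T0 = xx |: g (~: T0).
Proof.
apply/setP => y; case: (yP y) => [->|[z ->]].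
  by rewrite !inE eqxx (negbTE (L4 _)).
by rewrite !inE (negbTE (L2 z)) /= !L3 inE.
Qed.

Lemma compl_h T0 : ~: h T0 = g (~: T0).
Proof.
apply/setP => y; case: (yP y) => [->|[z ->]].
  by rewrite /h !inE eqxx /= (negbTE (L4 _)).
by rewrite /h !inE (negbTE (L2 z)) /= !L3 inE.
Qed.

Lemma sum_split (V : nmodType) (F : {set D'} -> V) :
  \sum_(T : {set D'}) F T = \sum_(T0 : {set D}) (F (g T0) + F (h T0)).
Proof.
rewrite big_split /= [LHS](bigID (fun T : {set D'} => xx \in T)) /= addrC.


congr (_ + _)%R.
  rewrite -(big_imset F (h:=g) (A:=predT)); last by move=> ? ? _ _; apply: g_inj.
  rewrite [RHS]big_mkcond [LHS]big_mkcond; apply: eq_bigr => T _.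
  suff -> : (T \in [set g x | x in predT]%SET) = (xx \notin T) by [].
  apply/imsetP/idP => [[T0 _ ->]|nT]; first exact: L4.
  exists (io @^-1: T) => //; apply/setP => y; case: (yP y) => [->|[z ->]].
    by rewrite (negbTE nT) (negbTE (L4 _)).
  by rewrite L3 inE.
rewrite -(big_imset F (h:=h) (A:=predT)); last by move=> ? ? _ _; apply: h_inj.
rewrite [RHS]big_mkcond [LHS]big_mkcond; apply: eq_bigr => T _.
suff -> : (T \in [set h x | x in predT]%SET) = (xx \in T) by [].
apply/imsetP/idP => [[T0 _ ->]|nT]; first by rewrite setU11.
exists (io @^-1: T) => //; apply/setP => y; case: (yP y) => [->|[z ->]].
  by rewrite nT setU11.
by rewrite in_setU1 (negbTE (L2 z)) /= L3 inE.
Qed.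


Lemma sel_g T0 : sel_prob q (g T0) = sel_prob q T0 * (1 - q x).
Proof.
rewrite /sel_prob compl_g big_setU1 ?L4 //= !big_imset /=; try by move=> ? ? _ _; apply io_inj.
have -> : \prod_(i in T0) q (val (io i)) = \prod_(i in T0) q (val i) by [].
have -> : \prod_(i in ~: T0) (1 - q (val (io i))) = \prod_(i in ~: T0) (1 - q (val i)) by [].

ring.
Qed.

Lemma sel_h T0 : sel_prob q (h T0) = sel_prob q T0 * q x.
Proof.
rewrite /sel_prob compl_h /h big_setU1 ?L4 //= !big_imset /=; try by move=> ? ? _ _; apply io_inj.
have -> : \prod_(i in T0) q (val (io i)) = \prod_(i in T0) q (val i) by [].
have -> : \prod_(i in ~: T0) (1 - q (val (io i))) = \prod_(i in ~: T0) (1 - q (val i)) by [].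

ring.
Qed.

Lemma weighted_g T0 : weighted_of q (g T0) = weighted_of q T0.
Proof.
apply/fsetP => p; apply/imfsetP/imfsetP => /= [[y yT ->]|[z zT ->]].
  by case/imsetP: yT => z zT ->; exists z.
by exists (io z) => //=; rewrite L3.
Qed.

Lemma weighted_h T0 :
  weighted_of q (h T0) = weighted_of q T0 `|` [fset ((q x)^-1, x)].
Proof.
apply/fsetP => p; rewrite in_fsetU in_fset1.
apply/imfsetP/orP => /= [[y yT ->]|[/imfsetP [z /= zT ->]|/eqP ->]].
- case/setU1P: yT => [->|]; first by right.
  by case/imsetP => z zT ->; left; apply/imfsetP; exists z.
- by exists (io z) => //=; rewrite /h in_setU1 L3 zT orbT.
- by exists xx => //=; rewrite /h setU11.
Qed.

End Comb.

Lemma key (R : realType) (a b q E : R) : 0<=a -> 0<=b -> 0<q -> q<=1 -> 1<=E -> b <= E*a -> a <= E*b -> a <= (1+q*(E-1))*((1-q)*a+q*b) /\ (1-q)*a+q*b <= (1+q*(E-1))*a.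
Proof.
move=> a0 b0 q0 q1 E1 ba ab; split; last by nra.
set br := (E-1)*(1-q)*a + b*(1+q*(E-1)) - a.
have hE : 0 <= E * br.
  have h1 : 0 <= (1 + q*(E-1)) * (E*b - a) by apply: mulr_ge0; nra.
  have h2 : 0 <= a * ((E-1)*(E-1)*(1-q)) by apply: mulr_ge0 => //; apply: mulr_ge0; nra.
  rewrite /br; nra.
have hb : 0 <= br.
  rewrite pmulr_rge0 in hE => //; lra.
have : 0 <= q * br by apply: mulr_ge0 => //; lra.
rewrite /br; nra.
Qed.

Lemma Mfin (R : realType) (n : nat) (dY : measure_display) (Y : measurableType dY)
  (M : {fset (R * 'rV[R]_n)} -> probability Y R) S (A : set Y) :
  measurable A -> M S A = (fine (M S A))%:E.
Proof.
move=> mA; rewrite fineK // ge0_fin_numE ?measure_ge0 //.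
exact: (le_lt_trans (probability_le1 _ mA) (ltry _)).
Qed.

Arguments Mfin {R n dY Y} M S {A}.

Lemma sel_ge0 (R : realType) (n : nat) (q : 'rV[R]_n -> R) (D : {fset 'rV[R]_n}) :
  (forall y, y \in D -> 0 < q y <= 1) -> forall T : {set D}, 0 <= sel_prob q T.
Proof.
move=> H T; rewrite /sel_prob; apply: mulr_ge0; apply: prodr_ge0 => i _;
  have /andP[] := H (val i) (valP i); lra.
Qed.


Theorem theorem2 (R : realType) (n : nat) (X : set 'rV[R]_n)
  (dY : measure_display) (Y : measurableType dY)
  (M : {fset (R * 'rV[R]_n)} -> probability Y R)
  (eps : R -> 'rV[R]_n -> R)
  (q : 'rV[R]_n -> R) :
  weighted_profile X M eps ->
  (forall x, X x -> 0 < q x <= 1) ->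
  profile X (composed_law M q)
    (fun x => ln (1 + q x * (expR (eps (q x)^-1 x) - 1))).
Proof.
move=> [eps0 Heps] qP.
have w1 : forall x, X x -> 1 <= (q x)^-1.
  by move=> x Xx; have /andP[q0 q1] := qP x Xx; rewrite invf_ge1.
have E1 : forall x, X x -> 1 <= expR (eps (q x)^-1 x).
  move=> x Xx; have := eps0 _ x (w1 x Xx) Xx => e0.
  have := expR_ge1Dx (eps (q x)^-1 x); lra.
split.
  move=> x Xx; apply: ln_ge0; have /andP[q0 q1] := qP x Xx.
  have := E1 x Xx; nra.
move=> D x HD Xx A mA.
have /andP[q0 q1] := qP x Xx.
have Ex := E1 x Xx.
set E := expR (eps (q x)^-1 x) in Ex *.
have -> : expR (ln (1 + q x * (E - 1))) = 1 + q x * (E - 1).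
  by rewrite lnK // posrE; nra.
have qD : forall y, y \in D -> 0 < q y <= 1 by move=> y /HD; apply: qP.
case: (boolP (x \in D)) => xD.
  have -> : (D `|` [fset x])%fset = D by apply/fsetUidPl; rewrite fsub1set.
  have c1 : (1 <= (1 + q x * (E-1))%:E)%E by rewrite lee_fin; nra.
  have g0 : (0 <= composed_law M q D A)%E.
    apply: sume_ge0 => T _; apply: mule_ge0; last exact: measure_ge0.
    by rewrite lee_fin; exact: sel_ge0.
  by split; apply: lee_pemull.
set a := fun T0 : {set D} => fine (M (weighted_of q T0) A).
set b := fun T0 : {set D} =>
  fine (M (weighted_of q T0 `|` [fset ((q x)^-1, x)])%fset A).
have L0 : composed_law M q D A = (\sum_(T0 : {set D}) sel_prob q T0 * a T0)%:E.
  rewrite /composed_law -sumEFin; apply: eq_bigr => T0 _.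
  by rewrite (Mfin M _ mA) EFinM.
have L1 : composed_law M q (D `|` [fset x])%fset A =
   (\sum_(T0 : {set D}) (sel_prob q T0 * (1 - q x) * a T0
                       + sel_prob q T0 * q x * b T0))%:E.
  rewrite /composed_law (@sum_split R n D x xD) -sumEFin; apply: eq_bigr => T0 _.
  rewrite sel_g // sel_h // weighted_g // weighted_h.
  by rewrite (Mfin M (weighted_of q T0) mA) (Mfin M (_ `|` _)%fset mA) -!EFinM -EFinD.
rewrite L0 L1 -!EFinM !lee_fin !mulr_sumr.
have wd : forall T0 : {set D}, wdataset_in X (weighted_of q T0).
  move=> T0 p /imfsetP [z /= _ ->] /=; have Xz : X (val z) by apply: HD; exact: valP.
  by split => //; apply: w1.
have H : forall T0 : {set D}, a T0 <= (1 + q x * (E - 1)) * ((1 - q x) * a T0 + q x * b T0)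
     /\ (1 - q x) * a T0 + q x * b T0 <= (1 + q x * (E - 1)) * a T0.
  move=> T0; have [h1 h2] := Heps _ _ _ (wd T0) (w1 x Xx) Xx A mA.
  rewrite (Mfin M (weighted_of q T0) mA) (Mfin M (_ `|` _)%fset mA) -EFinM lee_fin in h1.
  rewrite (Mfin M (weighted_of q T0) mA) (Mfin M (_ `|` _)%fset mA) -EFinM lee_fin in h2.
  apply: key => //; try exact: fine_ge0 (measure_ge0 _ _).
split; apply: ler_sum => T0 _; have p0 := @sel_ge0 R n q D qD T0; have [k1 k2] := H T0;
  set p := sel_prob q T0 in p0 *.
  have t : 0 <= p * ((1 + q x * (E - 1)) * ((1 - q x) * a T0 + q x * b T0) - a T0).
    by apply: mulr_ge0 => //; lra.
  lra.
have t : 0 <= p * ((1 + q x * (E - 1)) * a T0 - ((1 - q x) * a T0 + q x * b T0)).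
  by apply: mulr_ge0 => //; lra.
lra.
Qed.
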